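(* Let $\Gamma((r^S)_{S\subseteq I})$ be a quitting game satisfying $r^i_i=0$ for all $i\in I$, with $I_*=[n]\neq\emptyset$. If the problem $\mathrm{LCP}((\hat r^i)_{i=1}^n,\vec 0)$ has a solution $(w,z)$ with $z_0<1$, then for every $\varepsilon>0$ the game has a stationary $\varepsilon$-equilibrium.
   Context: A quitting game $\Gamma((r^S)_{S\subseteq I})$: finite player set $I=[N]$, vectors $r^S\in[-1,1]^N$ for all $S\subseteq I$; at each stage $t\in\mathbb N$ each player chooses to continue or quit; with $t^*$ the first stage at which some player quits and $S^*$ the set of players quitting then ($S^*=\emptyset$ if nobody ever quits), the payoff is $r^{S^*}$. Write $r^i:=r^{\{i\}}$. Strategies are sequences $x_i=(x_i^t)_t\subset[0,1]$ of conditional quitting probabilities; stationary if constant in $t$. $\gamma(x):=\mathbb E_x[r^{S^*}]$; $x$ is an $\varepsilon$-equilibrium if $\gamma_i(x)\ge\gamma_i(x_i',x_{-i})-\varepsilon$ for all $i,x_i'$. Normal players: $I_0:=I$, $I_{l+1}:=\{i\in I_l:\ \exists j\in I_l,\ j\neq i,\ r^j_i\le0\}$, $I_*:=\bigcap_l I_l$; $n:=|I_*|$, and players are renamed so that $I_*=[n]$. For $i\in[n]$, $\hat r^i\in\mathbb R^n$ is the restriction of $r^i$ to the coordinates in $I_*$. For vectors $\hat r^1,\dots,\hat r^n,q\in\mathbb R^n$, the problem $\mathrm{LCP}((\hat r^i)_{i=1}^n,q)$ asks for $w\in\mathbb R^n_{\ge0}$ and a probability vector $z=(z_0,z_1,\dots,z_n)\in\Delta(\{0,1,\dots,n\})$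 such that $w=z_0q+\sum_{i=1}^n z_i\hat r^i$ and, for every $i\in[n]$, $z_i=0$ or $w_i=0$. *)

(* Defs.v *)
From mathcomp Require Import all_boot.
From Stdlib Require Import Reals ClassicalEpsilon.
Set Implicit Arguments. Unset Strict Implicit. Unset Printing Implicit Defensive.

Local Open Scope R_scope.

(* Players are 'I_N; a quitting game is given by payoffs r S i = r^S_i. *)
Definition payoffs (N : nat) := {set 'I_N} -> 'I_N -> R.

Definition valid_game (N : nat) (r : payoffs N) : Prop :=
  forall S i, -1 <= r S i <= 1.

(* A strategy profile: x i t = conditional quitting probability of player i
   at stage t (stages indexed from 0). *)
Definition profile (N : nat) := 'I_N -> nat -> R.

Definition is_strategy (y : nat -> R) : Prop := forall t, 0 <= y t <= 1.
Definition is_profile (N : nat) (x : profile N) : Prop :=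
  forall i, is_strategy (x i).
Definition stationary (N : nat) (x : profile N) : Prop :=
  forall i t, x i t = x i 0%nat.

Definition deviate (N : nat) (x : profile N) (i : 'I_N) (y : nat -> R)
  : profile N := fun j => if j == i then y else x j.

(* probability that exactly the set S quits at stage t (given play reached t) *)
Definition quit_prob (N : nat) (x : profile N) (t : nat) (S : {set 'I_N}) : R :=
  \big[Rmult/1]_(i in S) x i t * \big[Rmult/1]_(i in ~: S) (1 - x i t).

Definition reach (N : nat) (x : profile N) (t : nat) : R :=
  \big[Rmult/1]_(s < t) \big[Rmult/1]_(i < N) (1 - x i s).

(* expected payoff of player i truncated at stage T:
   outcomes decided before T, plus r^emptyset times Prob(no quit before T) *)
Definition partial_payoff (N : nat) (r : payoffs N) (x : profile N)
  (i : 'I_N) (T : nat) : R :=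
  \big[Rplus/0]_(t < T)
     (reach x t * \big[Rplus/0]_(S : {set 'I_N} | S != set0)
                    (quit_prob x t S * r S i))
  + reach x T * r set0 i.

(* gamma_i(x) = v : the expected payoff E_x[r^{S*}_i]; the truncated
   expectations always converge to it. *)
Definition payoff_is (N : nat) (r : payoffs N) (x : profile N) (i : 'I_N) (v : R)
  : Prop := Un_cv (partial_payoff r x i) v.

Definition eps_equilibrium (N : nat) (r : payoffs N) (x : profile N) (eps : R)
  : Prop :=
  is_profile x /\
  forall (i : 'I_N) (y : nat -> R), is_strategy y ->
  forall v w, payoff_is r x i v -> payoff_is r (deviate x i y) i w ->
  v >= w - eps.

Definition Rleb (a b : R) : bool := if Rle_dec a b then true else false.

Definition normal_step (N : nat) (r : payoffs N) (A : {set 'I_N}) : {set 'I_N} :=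
  [set i in A | [exists j in A, (j != i) && Rleb (r [set j] i) 0]].

Definition I_level (N : nat) (r : payoffs N) (l : nat) : {set 'I_N} :=
  iter l (normal_step r) [set: 'I_N].

Definition Istar (N : nat) (r : payoffs N) : {set 'I_N} :=
  [set i | if excluded_middle_informative (forall l, i \in I_level r l)
           then true else false].

(* LCP((hat r^i)_{i in I_*}, q) with players of I_* kept under their original
   names: w, z indexed by I_*, z0 the weight of q. *)
Definition LCP_sol (N : nat) (r : payoffs N) (q : 'I_N -> R)
  (w : 'I_N -> R) (z0 : R) (z : 'I_N -> R) : Prop :=
  0 <= z0 /\
  (forall i, i \in Istar r -> 0 <= z i) /\
  z0 + \big[Rplus/0]_(i in Istar r) z i = 1 /\
  (forall k, k \in Istar r ->
     0 <= w k /\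
     w k = z0 * q k + \big[Rplus/0]_(i in Istar r) (z i * r [set i] k) /\
     (z k = 0 \/ w k = 0)).

(* Main.v *)
Require Import Defs.
From mathcomp Require Import all_boot.
From Stdlib Require Import Reals.
From HB Require Import structures.
From Stdlib Require Import Lra Psatz Classical ClassicalEpsilon.
Local Open Scope R_scope.
Set Warnings "-notation-overridden -redundant-canonical-projection".
Lemma RplusA : associative Rplus. Proof. move=> a b c; lra. Qed.
Lemma RmultA : associative Rmult. Proof. move=> a b c; ring. Qed.
HB.instance Definition _ := Monoid.isComLaw.Build R 0 Rplus RplusA Rplus_comm Rplus_0_l.
HB.instance Definition _ := Monoid.isComLaw.Build R 1 Rmult RmultA Rmult_comm Rmult_1_l.
HB.instance Definition _ := Monoid.isMulLaw.Build R 0 Rmult Rmult_0_l Rmult_0_r.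
HB.instance Definition _ := Monoid.isAddLaw.Build R Rmult Rplus Rmult_plus_distr_r Rmult_plus_distr_l.

Section Big.
Variable I : finType.
Implicit Types (P : pred I) (F G : I -> R).

Lemma sumR_le P F G : (forall i, P i -> F i <= G i) ->
  \big[Rplus/0]_(i | P i) F i <= \big[Rplus/0]_(i | P i) G i.
Proof. move=> H; elim/big_rec2: _ => [|i a b Pi Hab]; [lra| have := H i Pi; lra]. Qed.

Lemma sumR_ge0 P F : (forall i, P i -> 0 <= F i) -> 0 <= \big[Rplus/0]_(i | P i) F i.
Proof. move=> H; elim/big_rec: _ => [|i a Pi Ha]; [lra| have := H i Pi; lra]. Qed.

Lemma prodR_ge0 P F : (forall i, P i -> 0 <= F i) -> 0 <= \big[Rmult/1]_(i | P i) F i.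
Proof. move=> H; elim/big_rec: _ => [|i a Pi Ha]; [lra| have := H i Pi; nra]. Qed.

Lemma prodR_le1 P F : (forall i, P i -> 0 <= F i <= 1) -> \big[Rmult/1]_(i | P i) F i <= 1.
Proof.
move=> H; suff: 0 <= \big[Rmult/1]_(i | P i) F i <= 1 by case.
elim/big_rec: _ => [|i a Pi Ha]; [lra| have := H i Pi; nra].
Qed.

Lemma sumR_split P F G : \big[Rplus/0]_(i | P i) (F i + G i) =
  \big[Rplus/0]_(i | P i) F i + \big[Rplus/0]_(i | P i) G i.
Proof. exact: big_split. Qed.

Lemma sumR_scal P F c : \big[Rplus/0]_(i | P i) (c * F i) = c * \big[Rplus/0]_(i | P i) F i.
Proof. by rewrite big_distrr. Qed.

Lemma sumR_sub P F G : \big[Rplus/0]_(i | P i) (F i - G i) =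
  \big[Rplus/0]_(i | P i) F i - \big[Rplus/0]_(i | P i) G i.
Proof.
elim/big_rec3: _ => [|i a b c Pi ->]; lra.
Qed.

Lemma prod_ge_1_sub P F : (forall i, P i -> 0 <= F i <= 1) ->
  1 - \big[Rplus/0]_(i | P i) F i <= \big[Rmult/1]_(i | P i) (1 - F i).
Proof.
move=> H.
suff: 1 - \big[Rplus/0]_(i | P i) F i <= \big[Rmult/1]_(i | P i) (1 - F i)
   /\ 0 <= \big[Rplus/0]_(i | P i) F i by case.
elim/big_rec2: _ => [|i a b Pi [H1 H2]]; first lra.
have := H i Pi; split; nra.
Qed.

Lemma sumR_sub_le (A : pred I) F : (forall i, 0 <= F i) ->
  \big[Rplus/0]_(i | A i) F i <= \big[Rplus/0]_i F i.
Proof.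
move=> H; rewrite [X in _ <= X](bigID A) /=.
have := sumR_ge0 (fun i => ~~ (A i)) F (fun i _ => H i). lra.
Qed.

Lemma sum_if_eq (a : I) (u : I -> R) : \big[Rplus/0]_i (if i == a then u i else 0) = u a.
Proof. by rewrite -big_mkcond big_pred1_eq. Qed.

End Big.

Lemma sumR_abs (I : finType) (P : pred I) (F G : I -> R) :
  (forall i, P i -> - G i <= F i <= G i) ->
  (- \big[Rplus/0]_(i | P i) G i) <= \big[Rplus/0]_(i | P i) F i <= \big[Rplus/0]_(i | P i) G i.
Proof.
move=> H; elim/big_rec2: _ => [|i a b Pi Hab]; [lra| have := H i Pi; lra].
Qed.

Ltac nr := try unfold reverse_coercion in *.

Ltac unify_bigs := repeat match goal with
 |- context [@bigop.body ?R ?I1 ?x1 ?r1 ?F1] =>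
   match goal with |- context [@bigop.body R ?I2 ?x2 ?r2 ?F2] =>
     let e := constr:(@bigop.body R I1 x1 r1 F1) in
     let e2 := constr:(@bigop.body R I2 x2 r2 F2) in
     tryif constr_eq e e2 then fail else (change e2 with e)
   end
 end.
Ltac ar := nr; unify_bigs.

Lemma sumR_term_le (I : finType) (P : pred I) (F : I -> R) i : P i ->
  (forall j, P j -> 0 <= F j) -> F i <= \big[Rplus/0]_(j | P j) F j.
Proof.
move=> Pi H; rewrite (bigD1 i) //=.
have := @sumR_ge0 I (fun j => P j && (j != i)) F (fun j hj => H j (proj1 (andP hj))).
lra.
Qed.

Lemma D_ge (pk dl q : R) : 0 <= pk -> pk < dl -> dl <= 1/2 ->
  (dl - pk) * (1 - (dl - pk)) <= q -> dl / 4 <= pk + (1 - pk) * q.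
Proof.
move=> h1 h2 h3 h4.
have hs : (dl - pk) / 2 <= q by nra.
have : (1/2) * ((dl - pk) / 2) <= (1 - pk) * q.
  apply: Rmult_le_compat; lra.
lra.
Qed.

Lemma arith_i A B q L pk dl gm eps : 0 <= pk -> pk < dl -> dl <= 1/2 -> 0 <= gm ->
  3 * dl + gm <= eps / 8 -> q <= dl - pk -> (dl - pk) * (1 - (dl - pk)) <= q ->
  L - 2 * (dl - pk) ^ 2 <= A -> - q <= B <= q -> - (gm * dl) <= L ->
  (1 - pk) * (B * q - A) <= eps * (pk + (1 - pk) * q).
Proof.
move=> h1 h2 h3 h4 h5 h6 h7 h8 [h9 h10] h11.
have hq0 : 0 <= q by nra.
have hBq : B * q <= q * q by apply: Rmult_le_compat_r.
have hs2 : (dl - pk) ^ 2 <= dl * dl by nra.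
have hqq : q * q <= dl * dl by nra.
have hU : B * q - A <= dl * (3 * dl + gm) by nra.
have hU0 : 0 <= dl * (3 * dl + gm) by nra.
have hD := @D_ge pk dl q h1 h2 h3 h7.
have he : 0 < eps by lra.
have : (1 - pk) * (B * q - A) <= dl * (3 * dl + gm).
  destruct (Rle_or_lt (B * q - A) 0) as [hn|hp]; first nra.
  have : (1 - pk) * (B * q - A) <= 1 * (B * q - A) by apply: Rmult_le_compat_r; lra.
  lra.
have : dl * (3 * dl + gm) <= dl * (eps / 8) by apply: Rmult_le_compat_l; lra.
have : eps * (dl / 4) <= eps * (pk + (1 - pk) * q) by apply: Rmult_le_compat_l; lra.
lra.
Qed.

Lemma arith_ii A B q L pk dl gm eps : 0 <= pk -> pk < dl -> dl <= 1/2 -> 0 <= gm ->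
  3 * dl + gm <= eps / 8 -> q <= dl - pk -> (dl - pk) * (1 - (dl - pk)) <= q ->
  A <= L + 2 * (dl - pk) ^ 2 -> - q <= B <= q -> pk * L <= gm * dl * (dl - pk) ->
  pk * (A - B * q) <= eps * q * (pk + (1 - pk) * q).
Proof.
move=> h1 h2 h3 h4 h5 h6 h7 h8 [h9 h10] h11.
have hD := @D_ge pk dl q h1 h2 h3 h7.
remember (dl - pk) as s eqn:Hs.
have hs0 : 0 < s by lra.
have hq0 : 0 <= q by nra.
have hBq : - (q * q) <= B * q by nra.
have hqq : q * q <= s * s by apply: Rmult_le_compat; lra.
have hAB : A - B * q <= L + 3 * (s * s) by nra.
have h1' : pk * (A - B * q) <= pk * (L + 3 * (s * s)) by apply: Rmult_le_compat_l.
have h2' : pk * (3 * (s * s)) <= dl * (3 * (s * s)) by apply: Rmult_le_compat_r; nra.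
have h3' : s * dl * (3 * s + gm) <= s * dl * (eps / 8).
  apply: Rmult_le_compat_l; [nra|]; lra.
have hq2 : s / 2 <= q by nra.
have he : 0 < eps by lra.
have : eps * (s / 2) * (dl / 4) <= eps * q * (pk + (1 - pk) * q).
  apply: Rmult_le_compat; [nra | lra | apply: Rmult_le_compat_l; lra | lra].
nra.
Qed.

Lemma lim_le (u : nat -> R) w M c th :
  Un_cv u w -> (forall T, u T <= M + c * th ^ T) -> 0 <= th < 1 -> 0 <= c -> w <= M.
Proof.
move=> Hu Hb Hth Hc.
destruct (Rle_or_lt w M) as [|Hlt]; first by [].
exfalso.
set e := (w - M) / 2.
have He : 0 < e by rewrite /e; lra.
have Hed : 2 * e = w - M by rewrite /e; field.
destruct (Hu e He) as [N1 HN1].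
have Hth' : Rabs th < 1 by rewrite Rabs_right; lra.
have Hy : 0 < e / (c + 1) by apply: Rdiv_lt_0_compat; lra.
destruct (pow_lt_1_zero th Hth' (e / (c + 1)) Hy) as [N2 HN2].
set n := Nat.max N1 N2.
have H1 := HN1 n (Nat.le_max_l N1 N2).
have H2 := HN2 n (Nat.le_max_r N1 N2).
have H3 := Hb n.
rewrite /Rdist in H1.
have Hp : 0 <= th ^ n by apply: pow_le; lra.
rewrite Rabs_right in H2; last lra.
have H4 : c * th ^ n <= c * (e / (c + 1)) by apply: Rmult_le_compat_l; lra.
have H5 : c * (e / (c + 1)) < e.
  apply: (Rmult_lt_reg_r (c + 1)); first lra.
  have -> : c * (e / (c + 1)) * (c + 1) = c * e by field; lra.
  nra.
move: H1; rewrite /R_dist => H1.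
case: (Rabs_def2 _ _ H1) => ??; lra.
Qed.

Lemma lim_ge (u : nat -> R) w M c th :
  Un_cv u w -> (forall T, M - c * th ^ T <= u T) -> 0 <= th < 1 -> 0 <= c -> M <= w.
Proof.
move=> Hu Hb Hth Hc.
have := lim_le (opp_seq u) (- w) (- M) c th (CV_opp _ _ Hu).
rewrite /opp_seq => H.
have : - w <= - M by apply: H => // T; have := Hb T; lra.
lra.
Qed.

Lemma accum_le (a e d : nat -> R) M :
  a 0%nat = 1 -> (forall t, a t.+1 = a t * (1 - d t)) -> (forall t, 0 <= a t) ->
  (forall t, e t <= M * d t) ->
  forall T, \big[Rplus/0]_(t < T) (a t * e t) <= M * (1 - a T).
Proof.
move=> H0 Hs Ha He; elim=> [|T IH].
  by rewrite big_ord0 H0; lra.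
rewrite big_ord_recr /= Hs.
have := He T; have := Ha T => h1 h2.
have : a T * e T <= a T * (M * d T) by apply: Rmult_le_compat_l.
move: IH; ar; nra.
Qed.

Lemma accum_ge (a e d : nat -> R) M :
  a 0%nat = 1 -> (forall t, a t.+1 = a t * (1 - d t)) -> (forall t, 0 <= a t) ->
  (forall t, M * d t <= e t) ->
  forall T, M * (1 - a T) <= \big[Rplus/0]_(t < T) (a t * e t).
Proof.
move=> H0 Hs Ha He; elim=> [|T IH].
  by rewrite big_ord0 H0; lra.
rewrite big_ord_recr /= Hs.
have := He T; have := Ha T => h1 h2.
have : a T * (M * d T) <= a T * e T by apply: Rmult_le_compat_l.
move: IH; ar; nra.
Qed.

Set Implicit Arguments. Unset Strict Implicit.

Section QP.
Variable N : nat.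
Notation T := 'I_N.
Definition qp (f : T -> R) (S : {set T}) : R :=
  \big[Rmult/1]_(i in S) f i * \big[Rmult/1]_(i in ~: S) (1 - f i).
Definition hif (f : T -> R) (S : {set T}) i := if i \in S then f i else 1 - f i.

Lemma qp_if f S : qp f S = \big[Rmult/1]_i hif f S i.
Proof.
rewrite /qp [RHS](bigID (mem S)) /=; congr (_ * _).
  by apply: eq_bigr => i Hi; rewrite /hif Hi.
rewrite [RHS](eq_bigr (fun i => 1 - f i)); last by move=> i /negbTE; rewrite /hif => ->.
by apply: eq_bigl => i; rewrite in_setC.
Qed.

Definition is01 (f : T -> R) := forall i, 0 <= f i <= 1.

Lemma qp_ge0 f S : is01 f -> 0 <= qp f S.
Proof.
move=> H; rewrite qp_if; apply: prodR_ge0 => i _; rewrite /hif.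
have := H i; case: (i \in S); lra.
Qed.

Lemma qp_sum1 f : \big[Rplus/0]_S qp f S = 1.
Proof.
have -> : \big[Rplus/0]_S qp f S = \big[Rmult/1]_i (f i + (1 - f i)).
  rewrite bigA_distr; apply: eq_bigr => S _; rewrite qp_if //.
rewrite big1 // => i _; lra.
Qed.

Lemma qp_set0 f : qp f set0 = \big[Rmult/1]_i (1 - f i).
Proof.
rewrite qp_if; apply: eq_bigr => i _; by rewrite /hif in_set0.
Qed.

Lemma qp_set1 f j : qp f [set j] = f j * \big[Rmult/1]_(i | i != j) (1 - f i).
Proof.
rewrite /qp big_set1; congr (_ * _); apply: eq_bigl => i.
by rewrite in_setC in_set1.
Qed.

Lemma sum_nonempty f : \big[Rplus/0]_(S | S != set0) qp f S = 1 - qp f set0.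
Proof.
have := qp_sum1 f; rewrite (bigD1 set0) //=; lra.
Qed.

Lemma sum_split1 (g : {set T} -> R) :
  \big[Rplus/0]_(S | S != set0) g S =
  \big[Rplus/0]_j g [set j] + \big[Rplus/0]_(S | (S != set0) && (#|S| != 1%nat)) g S.
Proof.
rewrite (bigID (fun S : {set T} => #|S| == 1%nat)) /=; congr (_ + _).
rewrite -big_cards1; apply: eq_bigl => S.
case E: (#|S| == 1%nat); rewrite ?andbT ?andbF //.
by apply/eqP => S0; move: E; rewrite S0 cards0.
Qed.

End QP.

Section Est.
Variable N : nat.
Notation T := 'I_N.
Variable f : T -> R.
Hypothesis Hf : is01 f.
Local Notation sig := (\big[Rplus/0]_i f i).

Lemma sig_ge0 : 0 <= sig.
Proof. apply: sumR_ge0 => i _; have := Hf i; lra. Qed.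

Lemma qp0_ge : 1 - sig <= qp f set0.
Proof. rewrite qp_set0; apply: prod_ge_1_sub => i _; exact: Hf. Qed.

Lemma qp1_bounds j : f j * (1 - sig) <= qp f [set j] <= f j.
Proof.
rewrite qp_set1.
set Pr := \big[Rmult/1]_(i | i != j) (1 - f i).
have H1 : Pr <= 1.
  apply: prodR_le1 => i _; have := Hf i; lra.
have H2 : 1 - \big[Rplus/0]_(i | i != j) f i <= Pr.
  apply: prod_ge_1_sub => i _; exact: Hf.
have H3 : \big[Rplus/0]_(i | i != j) f i <= sig.
  apply: sumR_sub_le => i; have := Hf i; lra.
have Hj := Hf j.
split; [apply: Rmult_le_compat_l; lra|].
have : f j * Pr <= f j * 1 by apply: Rmult_le_compat_l; lra.
lra.
Qed.

Lemma Q1_ge : sig * (1 - sig) <= \big[Rplus/0]_j qp f [set j].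
Proof.
rewrite Rmult_comm -sumR_scal; apply: sumR_le => j _.
apply: (Rle_trans _ _ _ _ (proj1 (qp1_bounds j))); right; ring.
Qed.

Lemma Q1_le : \big[Rplus/0]_j qp f [set j] <= sig.
Proof. apply: sumR_le => j _; exact: (proj2 (qp1_bounds j)). Qed.

Lemma T2_le : \big[Rplus/0]_(S | (S != set0) && (#|S| != 1%nat)) qp f S
   <= sig - \big[Rplus/0]_j qp f [set j].
Proof.
have := sum_nonempty f; rewrite sum_split1 => E.
have := qp0_ge; lra.
Qed.

Lemma est_gen (g : {set T} -> R) : (forall S, -1 <= g S <= 1) ->
  - (2 * (sig - \big[Rplus/0]_j qp f [set j])) <=
  \big[Rplus/0]_(S | S != set0) (qp f S * g S) - \big[Rplus/0]_j (f j * g [set j])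
  <= 2 * (sig - \big[Rplus/0]_j qp f [set j]).
Proof.
move=> Hg; rewrite sum_split1.
have HT2 := T2_le.
have Hr : (- \big[Rplus/0]_(S | (S != set0) && (#|S| != 1%nat)) qp f S) <= \big[Rplus/0]_(S | (S != set0) && (#|S| != 1%nat)) (qp f S * g S) <= \big[Rplus/0]_(S | (S != set0) && (#|S| != 1%nat)) qp f S.
  apply: sumR_abs => S _; have := Hg S; have := qp_ge0 S Hf; nr; split; nra.
have Hd : \big[Rplus/0]_j (qp f [set j] * g [set j]) - \big[Rplus/0]_j (f j * g [set j])
   = \big[Rplus/0]_j ((qp f [set j] - f j) * g [set j]).
  rewrite -sumR_sub; apply: eq_bigr => j _; nr; ring.
have Hs : \big[Rplus/0]_j (f j - qp f [set j]) = sig - \big[Rplus/0]_j qp f [set j] by rewrite sumR_sub.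
have Hd1 : (- \big[Rplus/0]_j (f j - qp f [set j])) <= \big[Rplus/0]_j ((qp f [set j] - f j) * g [set j]) <= \big[Rplus/0]_j (f j - qp f [set j]).
  apply: sumR_abs => j _; have := Hg [set j]; have := qp1_bounds j; nr; split; nra.
nr; lra.
Qed.

End Est.

Section Stage.
Variable N : nat.
Notation T := 'I_N.
Variable p : T -> R.
Hypothesis Hp : is01 p.
Variable k : T.
Definition f0 := fun i => if i == k then 0 else p i.
Definition f1 := fun i => if i == k then 1 else p i.
Definition Pk := \big[Rmult/1]_i (1 - f0 i).

Lemma prodD1 (F : T -> R) : \big[Rmult/1]_i F i = F k * \big[Rmult/1]_(i | i != k) F i.
Proof. by rewrite (bigD1 k). Qed.
Lemma sumD1 (F : T -> R) : \big[Rplus/0]_i F i = F k + \big[Rplus/0]_(i | i != k) F i.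
Proof. by rewrite (bigD1 k). Qed.

Lemma f0_01 : is01 f0.
Proof. move=> i; rewrite /f0; case: (i == k); [lra| exact: Hp]. Qed.
Lemma f1_01 : is01 f1.
Proof. move=> i; rewrite /f1; case: (i == k); [lra| exact: Hp]. Qed.

Lemma stage_lin (f : T -> R) S : (forall i, i != k -> f i = p i) ->
  qp f S = f k * qp f1 S + (1 - f k) * qp f0 S.
Proof.
move=> Hf; rewrite !qp_if !prodD1.
have E1 : \big[Rmult/1]_(i | i != k) hif f1 S i = \big[Rmult/1]_(i | i != k) hif f S i.
  apply: eq_bigr => i Hi; rewrite /hif /f1 (negbTE Hi) Hf //.
have E0 : \big[Rmult/1]_(i | i != k) hif f0 S i = \big[Rmult/1]_(i | i != k) hif f S i.
  apply: eq_bigr => i Hi; rewrite /hif /f0 (negbTE Hi) Hf //.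
rewrite E1 E0 /hif /f0 /f1 eqxx; case: (k \in S); ring.
Qed.

Lemma stage_noquit (f : T -> R) : (forall i, i != k -> f i = p i) ->
  \big[Rmult/1]_i (1 - f i) = (1 - f k) * Pk.
Proof.
move=> Hf; rewrite /Pk !prodD1.
have -> : f0 k = 0 by rewrite /f0 eqxx.
rewrite [in LHS](eq_bigr (fun i => 1 - f0 i)); first by rewrite Rminus_0_r Rmult_1_l.
by move=> i Hi; rewrite /f0 (negbTE Hi) Hf.
Qed.

Lemma sum_f0 : \big[Rplus/0]_i f0 i = \big[Rplus/0]_i p i - p k.
Proof.
rewrite !sumD1.
have -> : f0 k = 0 by rewrite /f0 eqxx.
rewrite [in LHS](eq_bigr (fun i => p i)); first by ar; ring.
by move=> i Hi; rewrite /f0 (negbTE Hi).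
Qed.

Lemma qp_f1_set0 : qp f1 set0 = 0.
Proof. rewrite qp_set0 prodD1 /f1 eqxx; ring. Qed.

Lemma qp_f1_setk : qp f1 [set k] = Pk.
Proof.
rewrite qp_set1 /f1 eqxx Rmult_1_l /Pk prodD1 /f0 eqxx Rminus_0_r Rmult_1_l.
by apply: eq_bigr => i Hi; rewrite (negbTE Hi).
Qed.

Lemma B_bound (g : {set T} -> R) : (forall S, -1 <= g S <= 1) -> g [set k] = 0 ->
  (- (1 - Pk)) <= \big[Rplus/0]_(S | S != set0) (qp f1 S * g S) <= 1 - Pk.
Proof.
move=> Hg Hk.
have Hs := qp_sum1 f1.
rewrite (bigD1 set0) //= qp_f1_set0 (bigD1 [set k]) /= in Hs; last first.
  by apply/eqP => /setP /(_ k); rewrite in_set1 in_set0 eqxx.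
rewrite (bigD1 [set k]) /=; last first.
  by apply/eqP => /setP /(_ k); rewrite in_set1 in_set0 eqxx.
rewrite Hk Rmult_0_r Rplus_0_l.
rewrite qp_f1_setk in Hs.
have [H1 H2] : (- \big[Rplus/0]_(S | (S != set0) && (S != [set k])) qp f1 S)
   <= \big[Rplus/0]_(S | (S != set0) && (S != [set k])) (qp f1 S * g S)
   <= \big[Rplus/0]_(S | (S != set0) && (S != [set k])) qp f1 S.
  apply: sumR_abs => S _; have := Hg S; have := qp_ge0 S f1_01; split; nra.
move: Hs H1 H2; ar; lra.
Qed.

End Stage.

Section Dyn.
Variable N : nat.
Notation T := 'I_N.
Variable r : payoffs N.
Hypothesis Hr : valid_game r.
Variable p : T -> R.
Hypothesis Hp : is01 p.
Variable k : T.
Variable x : profile N.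
Hypothesis Hx : forall i t, i != k -> x i t = p i.
Hypothesis Hxp : is_profile x.

Definition Aq := \big[Rplus/0]_(S | S != set0) (qp (f0 p k) S * r S k).
Definition Bq := \big[Rplus/0]_(S | S != set0) (qp (f1 p k) S * r S k).

Lemma stage_pay t : \big[Rplus/0]_(S | S != set0) (quit_prob x t S * r S k)
   = x k t * Bq + (1 - x k t) * Aq.
Proof.
rewrite /Aq /Bq -!sumR_scal -sumR_split; apply: eq_bigr => S _.
rewrite /quit_prob -/(qp (fun i => x i t) S) (stage_lin (p := p) (k := k)) //=; first ring.
by move=> i Hi; apply: Hx.
Qed.

Lemma reach_succ t : reach x t.+1 = reach x t * ((1 - x k t) * Pk p k).
Proof.
rewrite /reach big_ord_recr /=; congr (_ * _).
by rewrite (stage_noquit (p := p) (k := k) (f := fun i => x i t)) // => i Hi; apply: Hx.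
Qed.

Lemma reach0 : reach x 0 = 1.
Proof. by rewrite /reach big_ord0. Qed.

Lemma Pk_ge0 : 0 <= Pk p k.
Proof. apply: prodR_ge0 => i _; have := f0_01 Hp k i; lra. Qed.

Lemma reach_ge0 t : 0 <= reach x t.
Proof.
elim: t => [|t IH]; first by rewrite reach0; lra.
rewrite reach_succ; have := Hxp k t; have := Pk_ge0 => h1 h2.
apply: Rmult_le_pos => //; apply: Rmult_le_pos; lra.
Qed.

Lemma reach_le t : reach x t <= Pk p k ^ t.
Proof.
elim: t => [|t IH]; first by rewrite reach0 /=; lra.
rewrite reach_succ /=; have := Hxp k t; have := Pk_ge0; have := reach_ge0 t => h0 h1 h2.
have : reach x t * ((1 - x k t) * Pk p k) <= reach x t * Pk p k.
  apply: Rmult_le_compat_l => //; nra.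
have : reach x t * Pk p k <= Pk p k ^ t * Pk p k by apply: Rmult_le_compat_r.
nra.
Qed.

Lemma partial_eq T0 : partial_payoff r x k T0 =
  \big[Rplus/0]_(t < T0) (reach x t * (x k t * Bq + (1 - x k t) * Aq)) + reach x T0 * r set0 k.
Proof.
rewrite /partial_payoff; congr (_ + _); apply: eq_bigr => t _; by rewrite stage_pay.
Qed.

Lemma dyn_upper M w : Pk p k < 1 ->
  (forall t, x k t * Bq + (1 - x k t) * Aq <= M * (1 - (1 - x k t) * Pk p k)) ->
  payoff_is r x k w -> w <= M.
Proof.
move=> HP He Hw.
apply: (lim_le _ w M (Rabs (r set0 k - M)) (Pk p k) Hw); last first.
- exact: Rabs_pos.
- by have := Pk_ge0; lra.
move=> T0; rewrite partial_eq.
have H1 := accum_le (reach x) (fun t => x k t * Bq + (1 - x k t) * Aq)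
  (fun t => 1 - (1 - x k t) * Pk p k) M reach0.
have {H1} H1 := H1 (fun t => ltac:(rewrite reach_succ; ring)) reach_ge0 He T0.
have H2 := reach_le T0; have H3 := reach_ge0 T0.
have H4 : reach x T0 * (r set0 k - M) <= Pk p k ^ T0 * Rabs (r set0 k - M).
  apply: (Rle_trans _ (reach x T0 * Rabs (r set0 k - M))).
    apply: Rmult_le_compat_l => //; exact: Rle_abs.
  apply: Rmult_le_compat_r => //; exact: Rabs_pos.
move: H1 H4; ar; nra.
Qed.

Lemma dyn_lower M w : Pk p k < 1 ->
  (forall t, M * (1 - (1 - x k t) * Pk p k) <= x k t * Bq + (1 - x k t) * Aq) ->
  payoff_is r x k w -> M <= w.
Proof.
move=> HP He Hw.
apply: (lim_ge _ w M (Rabs (r set0 k - M)) (Pk p k) Hw); last first.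
- exact: Rabs_pos.
- by have := Pk_ge0; lra.
move=> T0; rewrite partial_eq.
have H1 := accum_ge (reach x) (fun t => x k t * Bq + (1 - x k t) * Aq)
  (fun t => 1 - (1 - x k t) * Pk p k) M reach0.
have {H1} H1 := H1 (fun t => ltac:(rewrite reach_succ; ring)) reach_ge0 He T0.
have H2 := reach_le T0; have H3 := reach_ge0 T0.
have H4 : - (Pk p k ^ T0 * Rabs (r set0 k - M)) <= reach x T0 * (r set0 k - M).
  apply: (Rle_trans _ (- (reach x T0 * Rabs (r set0 k - M)))).
    apply: Ropp_le_contravar; apply: Rmult_le_compat_r => //; exact: Rabs_pos.
  have := Rabs_pos (r set0 k - M); have := Rle_abs (- (r set0 k - M)); rewrite Rabs_Ropp.
  nra.
move: H1 H4; ar; nra.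
Qed.

End Dyn.

Section Core.
Variable N : nat.
Variable r : payoffs N.
Hypothesis Hr : valid_game r.
Hypothesis Hd : forall i, r [set i] i = 0.
Variables (p : 'I_N -> R) (dl gm eps : R).
Hypothesis Hp0 : forall i, 0 <= p i.
Hypothesis Hsum : \big[Rplus/0]_i p i = dl.
Hypothesis Hdl : dl <= 1/2.
Hypothesis Hlt : forall k, p k < dl.
Hypothesis Hgm : 0 <= gm.
Hypothesis Heps : 3 * dl + gm <= eps / 8.
Hypothesis HL1 : forall k, - (gm * dl) <= \big[Rplus/0]_j (p j * r [set j] k).
Hypothesis HL2 : forall k, p k * \big[Rplus/0]_j (p j * r [set j] k) <= gm * dl * (dl - p k).

Lemma Hp01 : is01 p.
Proof. move=> i; have := Hp0 i; have := Hlt i; lra. Qed.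

Section K.
Variable k : 'I_N.
Notation s := (dl - p k).
Notation L := (\big[Rplus/0]_j (p j * r [set j] k)).
Notation P := (Pk p k).
Notation A := (Aq r p k).
Notation B := (Bq r p k).

Lemma s_eq : \big[Rplus/0]_i f0 p k i = s.
Proof. by rewrite sum_f0 Hsum. Qed.

Lemma q_le : 1 - P <= s.
Proof.
have := qp0_ge (f0_01 Hp01 k); rewrite qp_set0 s_eq /Pk; ar; lra.
Qed.

Lemma q_ge : s * (1 - s) <= 1 - P.
Proof.
have H1 := sum_nonempty (f0 p k); rewrite sum_split1 in H1.
have H2 := Q1_ge (f0_01 Hp01 k); rewrite s_eq in H2.
have H3 : 0 <= \big[Rplus/0]_(S | (S != set0) && (#|S| != 1%nat)) qp (f0 p k) S.
  apply: sumR_ge0 => S _; exact: qp_ge0 (f0_01 Hp01 k).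
move: H1 H2 H3; rewrite qp_set0 /Pk; ar; lra.
Qed.

Lemma L_eq : \big[Rplus/0]_j (f0 p k j * r [set j] k) = L.
Proof.
apply: eq_bigr => j _; rewrite /f0; case: eqP => [->|//]; rewrite Hd; ring.
Qed.

Lemma A_bounds : L - 2 * s ^ 2 <= A <= L + 2 * s ^ 2.
Proof.
have Hg : forall S, -1 <= r S k <= 1 by move=> S; exact: Hr.
have H := est_gen (f0_01 Hp01 k) Hg.
have H2 := Q1_ge (f0_01 Hp01 k).
rewrite s_eq in H H2; rewrite L_eq in H.
rewrite /Aq; move: H H2; ar; nra.
Qed.

Lemma B_bounds : - (1 - P) <= B <= 1 - P.
Proof.
apply: (B_bound Hp01) => // S; exact: Hr.
Qed.

Lemma final_bounds : let q := 1 - P in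
  let D := p k + (1 - p k) * q in
  let V := (p k * B + (1 - p k) * A) / D in
  0 < D /\ B <= V + eps /\ A <= (V + eps) * q /\ 0 < q.
Proof.
move=> q D V.
have h1 := Hp0 k; have h2 := Hlt k; have h5 := q_le; have h6 := q_ge;
have [h7 h8] := A_bounds; have h9 := B_bounds; have h10 := HL1 k; have h11 := HL2 k.
have hD := @D_ge (p k) dl q h1 h2 Hdl h6.
have hD0 : 0 < D by rewrite /D; lra.
have hi := @arith_i A B q L (p k) dl gm eps h1 h2 Hdl Hgm Heps h5 h6 h7 h9 h10.
have hii := @arith_ii A B q L (p k) dl gm eps h1 h2 Hdl Hgm Heps h5 h6 h8 h9 h11.
have hVD : V * D = p k * B + (1 - p k) * A by rewrite /V; field; lra.
split => //; split; [|split].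
- apply: (Rmult_le_reg_r D) => //.
  have -> : (V + eps) * D = V * D + eps * D by ring.
  rewrite hVD; rewrite /D in hi *; nra.
- apply: (Rmult_le_reg_r D) => //.
  have -> : (V + eps) * q * D = (V * D) * q + eps * q * D by ring.
  rewrite hVD; rewrite /D in hii *; nra.
- have : 0 < (dl - p k) * (1 - (dl - p k)) by apply: Rmult_lt_0_compat; lra.
  rewrite /q; lra.
Qed.

Lemma dev_payoff (y : nat -> R) : is_strategy y -> forall t,
  deviate (fun i _ => p i) k y k t = y t.
Proof. by move=> _ t; rewrite /deviate eqxx. Qed.

End K.

Lemma core_eq : eps_equilibrium r (fun i _ => p i) eps.
Proof.
split; first by move=> i t; exact: Hp01 i.
move=> k y Hy v w Hv Hw.
have [hD0 [hB [hA hq]]] := final_bounds k.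
set q := 1 - Pk p k in hB hA hq.
set D := p k + (1 - p k) * q in hD0 hB hA.
set V := (p k * Bq r p k + (1 - p k) * Aq r p k) / D in hB hA.
have hVD : V * D = p k * Bq r p k + (1 - p k) * Aq r p k by rewrite /V; field; lra.
have hP1 : Pk p k < 1 by rewrite /q in hq; lra.
have Hv1 : v <= V.
  apply: (dyn_upper (r := r) Hp01 (k := k) (x := fun i _ => p i) _ _ hP1 _ Hv) => //.
  by move=> i t; exact: Hp01.
  move=> t; rewrite -hVD /D /q; right; ring.
have Hv2 : V <= v.
  apply: (dyn_lower (r := r) Hp01 (k := k) (x := fun i _ => p i) _ _ hP1 _ Hv) => //.
  by move=> i t; exact: Hp01.
  move=> t; rewrite -hVD /D /q; right; ring.
have Hw1 : w <= V + eps.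
  apply: (dyn_upper (r := r) Hp01 (k := k) (x := deviate (fun i _ => p i) k y) _ _ hP1 _ Hw).
  - by move=> i t Hi; rewrite /deviate (negbTE Hi).
  - by move=> i t; rewrite /deviate; case: (i == k); [exact: Hy | exact: Hp01].
  move=> t; rewrite /deviate eqxx.
  have := Hy t => hy.
  have e1 : y t * Bq r p k <= y t * (V + eps) by apply: Rmult_le_compat_l; lra.
  have e2 : (1 - y t) * Aq r p k <= (1 - y t) * ((V + eps) * q) by apply: Rmult_le_compat_l; lra.
  rewrite /q in e2; move: e1 e2; ar; nra.
lra.
Qed.

End Core.

Lemma from_rho (N : nat) (r : payoffs N) (rho : 'I_N -> R) (gm eps : R) :
  valid_game r -> (forall i : 'I_N, r [set i] i = 0) ->
  (forall i, 0 <= rho i) -> \big[Rplus/0]_i rho i = 1 -> (forall k, rho k < 1) ->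
  0 <= gm -> gm <= eps / 16 -> 0 < eps ->
  (forall k, - gm <= \big[Rplus/0]_j (rho j * r [set j] k)) ->
  (forall k, rho k * \big[Rplus/0]_j (rho j * r [set j] k) <= gm * (1 - rho k)) ->
  exists x : profile N, stationary x /\ eps_equilibrium r x eps.
Proof.
move=> Hr Hd H0 H1 Hlt Hg1 Hg2 He Hc1 Hc2.
set dl := Rmin (1/2) (eps / 48).
have hdl1 : dl <= 1/2 by apply: Rmin_l.
have hdl2 : dl <= eps / 48 by apply: Rmin_r.
have hdl0 : 0 < dl by apply: Rmin_pos; lra.
exists (fun i _ => dl * rho i); split; first by [].
have HL : forall k, \big[Rplus/0]_j (dl * rho j * r [set j] k) =
     dl * \big[Rplus/0]_j (rho j * r [set j] k).
  move=> k; rewrite -sumR_scal; apply: eq_bigr => j _; ring.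
apply: (@core_eq N r Hr Hd (fun i => dl * rho i) dl gm eps) => //.
- move=> i; have := H0 i; nra.
- by rewrite sumR_scal H1 Rmult_1_r.
- move=> k; have := Hlt k; nra.
- lra.
- move=> k; rewrite HL; have := Hc1 k; ar; nra.
- move=> k; rewrite HL; have h := Hc2 k.
  have : dl * dl * (rho k * \big[Rplus/0]_j (rho j * r [set j] k)) <= dl * dl * (gm * (1 - rho k)).
    apply: Rmult_le_compat_l => //; nra.
  move: h; ar; nra.
Qed.

Section Star.
Variable N : nat.
Variable r : payoffs N.

Lemma istar_iff i : i \in Istar r <-> forall l, i \in I_level r l.
Proof.
rewrite /Istar inE; destruct (excluded_middle_informative _) as [h|h]; split => //.
Qed.

Lemma step_iff A i : i \in normal_step r A <->
  i \in A /\ exists j, j \in A /\ j != i /\ r [set j] i <= 0.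
Proof.
rewrite /normal_step inE; split.
- move=> /andP [Hi /existsP [j /andP [Hj /andP [Hji Hle]]]].
  split => //; exists j; split => //; split => //.
  by move: Hle; rewrite /Rleb; destruct (Rle_dec _ _).
- move=> [Hi [j [Hj [Hji Hle]]]]; rewrite Hi /=; apply/existsP; exists j.
  rewrite Hj Hji /= /Rleb; by destruct (Rle_dec _ _).
Qed.

Lemma level_succ l : I_level r l.+1 = normal_step r (I_level r l).
Proof. by rewrite /I_level iterS. Qed.

Lemma level0 i : i \in I_level r 0.
Proof. by rewrite /I_level /= inE. Qed.

Lemma star_has_neg k : k \in Istar r -> exists j, j != k /\ r [set j] k <= 0.
Proof.
move=> /istar_iff /(_ 1%nat); rewrite level_succ => /step_iff [_ [j [_ [Hj Hle]]]].
by exists j.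
Qed.

Lemma exit_level k : forall l, k \notin I_level r l ->
  exists m, k \in I_level r m /\ k \notin I_level r m.+1.
Proof.
elim=> [|l IH]; first by rewrite level0.
move=> Hn; case E: (k \in I_level r l); first by exists l; rewrite E.
apply: IH; by rewrite E.
Qed.

Lemma nonstar_pos k : k \notin Istar r -> forall j, j \in Istar r -> 0 < r [set j] k.
Proof.
move=> Hk j Hj.
have [l Hl] : exists l, k \notin I_level r l.
  apply: NNPP => Hc; move/negP: Hk; apply; apply/istar_iff => l.
  apply: NNPP => Hl; apply: Hc; exists l; exact/negP.
have [m [Hm Hm1]] := exit_level Hl.
apply: Rnot_le_lt => Hle; move/negP: Hm1; apply.
rewrite level_succ; apply/step_iff; split => //; exists j; split.
  by move/istar_iff: Hj; apply.
split => //; apply/eqP => Ejk; move: Hk; by rewrite -Ejk Hj.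
Qed.

End Star.

Section LCP.
Variable N : nat.
Variable r : payoffs N.
Hypothesis Hr : valid_game r.
Hypothesis Hd : forall i : 'I_N, r [set i] i = 0.
Variables (w : 'I_N -> R) (z0 : R) (z : 'I_N -> R).
Hypothesis Hl : LCP_sol r (fun _ => 0) w z0 z.
Hypothesis Hz0 : z0 < 1.

Notation I := (Istar r).
Definition Zs := \big[Rplus/0]_(i in I) z i.
Definition zeta i := if i \in I then z i / Zs else 0.

Lemma Zs_eq : Zs = 1 - z0.
Proof. case: Hl => _ [_ [H _]]; rewrite /Zs; lra. Qed.

Lemma Zs_pos : 0 < Zs.
Proof. rewrite Zs_eq; lra. Qed.

Lemma zeta_ge0 i : 0 <= zeta i.
Proof.
rewrite /zeta; case E: (i \in I); last lra.
case: Hl => _ [Hz _]; have := Hz i E; have := Zs_pos => h1 h2.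
rewrite /Rdiv; apply: Rmult_le_pos; [lra| left; apply: Rinv_0_lt_compat; lra].
Qed.

Lemma zeta_sum : \big[Rplus/0]_i zeta i = 1.
Proof.
rewrite /zeta -big_mkcond /=.
have -> : \big[Rplus/0]_(i in I) (z i / Zs) = / Zs * Zs.
  rewrite /Zs -sumR_scal; apply: eq_bigr => i _; rewrite /Rdiv; ring.
have := Zs_pos; move=> h; field; lra.
Qed.

Lemma zeta_le1 i : zeta i <= 1.
Proof.
rewrite -zeta_sum; apply: (@sumR_term_le _ predT) => // j _; exact: zeta_ge0.
Qed.

Lemma c_eq k : \big[Rplus/0]_j (zeta j * r [set j] k) =
   / Zs * \big[Rplus/0]_(j in I) (z j * r [set j] k).
Proof.
rewrite -sumR_scal [RHS]big_mkcond /=; apply: eq_bigr => j _; rewrite /zeta.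
case: (j \in I); rewrite /Rdiv; ring.
Qed.

Lemma w_eq k : k \in I -> w k = \big[Rplus/0]_(j in I) (z j * r [set j] k).
Proof. move=> Hk; case: Hl => _ [_ [_ H]]; have [_ [-> _]] := H k Hk; ring. Qed.

Lemma c_ge0 k : 0 <= \big[Rplus/0]_j (zeta j * r [set j] k).
Proof.
case E: (k \in I).
  rewrite c_eq -w_eq //; case: Hl => _ [_ [_ H]]; have [h _] := H k E.
  have := Zs_pos => hz; apply: Rmult_le_pos => //; left; exact: Rinv_0_lt_compat.
apply: sumR_ge0 => j _; rewrite /zeta; case F: (j \in I); last lra.
have := nonstar_pos (negbT E) F; have := zeta_ge0 j; rewrite /zeta F => h1 h2.
nra.
Qed.

Lemma c_zero k : zeta k <> 0 -> \big[Rplus/0]_j (zeta j * r [set j] k) = 0.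
Proof.
rewrite /zeta; case E: (k \in I); last by [].
move=> Hnz; rewrite c_eq -w_eq //; case: Hl => _ [_ [_ H]]; have [_ [_ [h|h]]] := H k E.
  by exfalso; apply: Hnz; rewrite h /Rdiv Rmult_0_l.
by rewrite h Rmult_0_r.
Qed.

Lemma main_eq eps : 0 < eps -> exists x : profile N, stationary x /\ eps_equilibrium r x eps.
Proof.
move=> He.
destruct (classic (exists k0, zeta k0 = 1)) as [[k0 Hk0]|Hnd]; last first.
  apply: (@from_rho N r zeta 0 eps Hr Hd).
  - exact: zeta_ge0.
  - exact: zeta_sum.
  - move=> k; have := zeta_le1 k => h; destruct h as [h|h] => //.
    by exfalso; apply: Hnd; exists k.
  - lra.
  - lra.
  - lra.
  - move=> k; move: (c_ge0 k); ar; lra.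
  - move=> k; destruct (Req_dec (zeta k) 0) as [h|h].
      rewrite h; lra.
    rewrite c_zero //; lra.
have Hk0I : k0 \in I.
  by move: Hk0; rewrite /zeta; case: (k0 \in I) => // h; lra.
have Hoth : forall i, i != k0 -> zeta i = 0.
  move=> i Hi.
  have h1 := zeta_sum; rewrite (bigD1 k0) //= Hk0 in h1.
  have h2 := @sumR_term_le _ (fun j => j != k0) zeta i Hi (fun j _ => zeta_ge0 j).
  move: h1 h2 (zeta_ge0 i); ar; lra.
have Hrk0 : forall i, 0 <= r [set k0] i.
  move=> i; have := c_ge0 i; rewrite (bigD1 k0) //= Hk0.
  rewrite big1; first lra.
  by move=> j Hj; rewrite Hoth // Rmult_0_l.
have [j0 [Hj0 Hj0le]] := star_has_neg Hk0I.
set al := Rmin (1/2) (eps / 32).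
have hal1 : al <= 1/2 by apply: Rmin_l.
have hal2 : al <= eps / 32 by apply: Rmin_r.
have hal0 : 0 < al by apply: Rmin_pos; lra.
set rho := fun i => (if i == k0 then 1 - al else 0) + (if i == j0 then al else 0).
have Hc : forall k, \big[Rplus/0]_j (rho j * r [set j] k) = (1 - al) * r [set k0] k + al * r [set j0] k.
  move=> k.
  have -> : \big[Rplus/0]_j (rho j * r [set j] k) =
    \big[Rplus/0]_j ((if j == k0 then (1 - al) * r [set j] k else 0) + (if j == j0 then al * r [set j] k else 0)).
    apply: eq_bigr => j _; rewrite /rho; case: (j == k0); case: (j == j0); ring.
  by rewrite sumR_split !sum_if_eq.
have Hjk : (j0 == k0) = false by apply/negbTE.
apply: (@from_rho N r rho (2 * al) eps Hr Hd).
- move=> i; rewrite /rho; case: (i == k0); case: (i == j0); lra.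
- rewrite sumR_split !sum_if_eq; lra.
- move=> k; rewrite /rho /=; case E1: (k == k0); case E2: (k == j0); try lra.
  by move/eqP: E1 => E1; move/eqP: E2 => E2; move: Hjk; rewrite -E1 -E2 eqxx.
- lra.
- lra.
- lra.
- move=> k; rewrite Hc; have := Hrk0 k; have := Hr [set j0] k; nra.
- move=> k; rewrite Hc /rho /=.
  case E1: (k == k0).
    move/eqP: E1 => ->; rewrite eq_sym Hjk Hd.
    have : (1 - al + 0) * ((1 - al) * 0 + al * r [set j0] k0) <= 0.
      have : al * r [set j0] k0 <= 0 by nra.
      nra.
    nra.
  case E2: (k == j0).
    move/eqP: E2 => ->; rewrite Hd.
    have [_ h] := Hr [set k0] j0.
    have : al * (1 - al) * r [set k0] j0 <= al * (1 - al) * 1 by apply: Rmult_le_compat_l => //; nra.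
    nra.
  lra.
Qed.

End LCP.

Theorem lemma3 (N : nat) (r : payoffs N) :
  valid_game r ->
  (forall i : 'I_N, r [set i] i = 0) ->
  Istar r != set0 ->
  (exists (w : 'I_N -> R) (z0 : R) (z : 'I_N -> R),
      LCP_sol r (fun _ => 0) w z0 z /\ z0 < 1) ->
  forall eps : R, eps > 0 ->
  exists x : profile N, stationary x /\ eps_equilibrium r x eps.
Proof.
move=> Hr Hd _ [w [z0 [z [Hl Hz0]]]] eps He.
exact: (main_eq Hr Hd Hl Hz0).
Qed.
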